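(* Fix $d\in[0,D]$ and consider the convex optimization problem \[ U(d)=\min_{\{E_n\},\{t_n\}} \ \sum_{n=1}^N E_n\left(1+\frac{h_n}{g_n}\right) \] subject to \[ d\le \sum_{n=1}^N t_n W\ln\left(1+\frac{E_n h_n}{t_n\sigma^2 W}\right),\qquad 2\sum_{n=1}^N t_n\le T-\frac{Ld}{f_B},\qquad E_n\ge 0,\ t_n\ge 0\ \ \forall n. \] Let $(\{E_n\},\{t_n\})$ be an optimal solution such that, for each $n$, either $E_n=t_n=0$ or both $E_n>0$ and $t_n>0$. Let $\mathcal P_T=\{n: E_n>0,\ t_n>0\}$, and define $\mathrm{SNR}_n^T=\frac{E_n h_n}{t_n\sigma^2 W}$ for $n\in\mathcal P_T$. Then \[ \mathrm{SNR}_i^T=\mathrm{SNR}_j^T \quad\text{for all } i,j\in\mathcal P_T, \] i.e., this quantity takes a common value $\mathrm{SNR}^T$.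
   Context: All parameters $N, h_n, g_n, W, \sigma^2, L, D, T, f_B$ are given positive constants, and $n$ ranges over $\{1,\dots,N\}$. The term $t_n W\ln\left(1+\frac{E_n h_n}{t_n\sigma^2W}\right)$ is interpreted as $0$ when $t_n=0$. *)

(* Defs.v *)
From HB Require Import structures.
From mathcomp Require Import all_boot all_order all_algebra.
From mathcomp Require Import all_classical all_reals all_analysis.
Set Implicit Arguments. Unset Strict Implicit. Unset Printing Implicit Defensive.
Import Order.TTheory GRing.Theory Num.Theory.
Local Open Scope ring_scope.

Section Defs.
Variables (R : realType) (N : nat).

Definition rate_term (W sigma2 h E t : R) : R :=
  if t == 0 then 0 else t * W * ln (1 + E * h / (t * sigma2 * W)).

Definition objective (h g E : 'I_N -> R) : R :=
  \sum_(n < N) E n * (1 + h n / g n).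

Definition feasible (h : 'I_N -> R) (W sigma2 L T fB d : R)
    (E t : 'I_N -> R) : Prop :=
  [/\ d <= \sum_(n < N) rate_term W sigma2 (h n) (E n) (t n),
      2 * \sum_(n < N) t n <= T - L * d / fB
    & forall n, 0 <= E n /\ 0 <= t n].

Definition optimal (h g : 'I_N -> R) (W sigma2 L T fB d : R)
    (E t : 'I_N -> R) : Prop :=
  feasible h W sigma2 L T fB d E t /\
  forall E' t', feasible h W sigma2 L T fB d E' t' ->
    objective h g E <= objective h g E'.

Definition SNR (W sigma2 h E t : R) : R := E * h / (t * sigma2 * W).
End Defs.

(* Main.v *)
Require Import Defs.
From HB Require Import structures.
From mathcomp Require Import all_boot all_order all_algebra.
From mathcomp Require Import all_classical all_reals all_analysis.
From mathcomp Require Import ring lra.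
Import Order.TTheory GRing.Theory Num.Theory.
Local Open Scope ring_scope.

Lemma ln_lt_sub1 (R : realType) (y : R) : 0 < y -> y != 1 -> ln y < y - 1.
Proof.
move=> y0 y1; rewrite ltrBrDl.
have := @expR_gt1Dx R (ln y); rewrite lnK ?posrE //; apply.
by rewrite ln_eq0.
Qed.

Lemma ln_le_sub1 (R : realType) (y : R) : 0 < y -> ln y <= y - 1.
Proof.
move=> y0; have H : -1 < y - 1 by lra.
by have := le_ln1Dx H; rewrite addrCA subrr addr0.
Qed.

Arguments ln_le_sub1 {R y}.

Arguments ln_lt_sub1 {R y}.

Lemma logsum (R : realType) (p q u v : R) : 0 < p -> 0 < q -> 0 < u -> 0 < v ->
  u / p != v / q ->
  p * ln (1 + u / p) + q * ln (1 + v / q) < (p + q) * ln (1 + (u + v) / (p + q)).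
Proof.
move=> p0 q0 u0 v0 neq.
set K := 1 + (u + v) / (p + q).
have K0 : 0 < K by rewrite /K; apply: addr_gt0 => //; apply: divr_gt0; lra.
set y1 := (1 + u / p) / K.
set y2 := (1 + v / q) / K.
have y10 : 0 < y1 by apply: divr_gt0 => //; apply: addr_gt0 => //; exact: divr_gt0.
have y20 : 0 < y2 by apply: divr_gt0 => //; apply: addr_gt0 => //; exact: divr_gt0.
have e1 : 1 + u / p = K * y1 by rewrite /y1 mulrCA divff ?mulr1 // gt_eqF.
have e2 : 1 + v / q = K * y2 by rewrite /y2 mulrCA divff ?mulr1 // gt_eqF.
have key : p * (y1 - 1) + q * (y2 - 1) = 0.
  rewrite /y1 /y2 /K; field; repeat (apply/andP; split); rewrite gt_eqF //; lra.
clearbody y1 y2 K.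
rewrite e1 e2 !lnM ?posrE //.
have [y11|y1n] := eqVneq y1 1.
  have y2n : y2 != 1.
    apply/eqP => y21; move/eqP: neq; apply.
    have : 1 + u / p = 1 + v / q by rewrite e1 e2 y21 y11.
    by move/addrI.
  have h1 := ln_le_sub1 y10. have h2 := ln_lt_sub1 y20 y2n.
  rewrite y11 ln1. nra.
have h1 := ln_lt_sub1 y10 y1n. have h2 := ln_le_sub1 y20.
nra.
Qed.

Arguments logsum {R p q u v}.
Lemma sum2 (R : realType) (N : nat) (F : 'I_N -> R) (i j : 'I_N) : i != j ->
  \sum_(n < N) F n = F i + F j + \sum_(n < N | (n != i) && (n != j)) F n.
Proof.
move=> ij; rewrite (bigD1 i) //= (bigD1 j) //=; last by rewrite eq_sym.
by rewrite addrA.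
Qed.
Arguments sum2 {R N} F {i j}.


Theorem lemma2 (R : realType) (N : nat) (h g : 'I_N -> R)
    (W sigma2 L D T fB : R)
    (HN : (0 < N)%N) (Hh : forall n, 0 < h n) (Hg : forall n, 0 < g n)
    (HW : 0 < W) (Hs : 0 < sigma2) (HL : 0 < L) (HD : 0 < D)
    (HT : 0 < T) (HfB : 0 < fB)
    (d : R) (Hd0 : 0 <= d) (HdD : d <= D)
    (E t : 'I_N -> R)
    (Hopt : optimal h g W sigma2 L T fB d E t)
    (Hsupp : forall n, (E n = 0 /\ t n = 0) \/ (0 < E n /\ 0 < t n)) :
  forall i j : 'I_N, 0 < E i -> 0 < t i -> 0 < E j -> 0 < t j ->
    SNR W sigma2 (h i) (E i) (t i) = SNR W sigma2 (h j) (E j) (t j).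
Proof.
move=> i j Ei ti Ej tj.
have [<-//|ij] := eqVneq i j.
have [eqS|neS] := eqVneq (SNR W sigma2 (h i) (E i) (t i)) (SNR W sigma2 (h j) (E j) (t j)); first by [].
exfalso.
case: Hopt => [[Hrate Htime Hnn] Hmin].
set a := fun n => h n / (sigma2 * W).
have a0 : forall n, 0 < a n by move=> n; apply: divr_gt0 => //; apply: mulr_gt0.
set p := t i. set q := t j. set u := E i * a i. set v := E j * a j.
have u0 : 0 < u by apply: mulr_gt0.
have v0 : 0 < v by apply: mulr_gt0.
have snrE : forall n, 0 < t n -> SNR W sigma2 (h n) (E n) (t n) = E n * a n / t n.
  move=> n tn; rewrite /SNR /a.
  field; repeat (apply/andP; split); rewrite gt_eqF //.
have rateE : forall n, 0 < t n -> rate_term W sigma2 (h n) (E n) (t n) = W * (t n * ln (1 + E n * a n / t n)).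
  move=> n tn; rewrite /rate_term gt_eqF //.
  have -> : E n * h n / (t n * sigma2 * W) = E n * a n / t n.
    by rewrite /a; field; repeat (apply/andP; split); rewrite gt_eqF.
  by rewrite -mulrA mulrCA.
have neq : u / p != v / q by rewrite -snrE // -snrE.
have Hls := logsum ti tj u0 v0 neq.
set Sold := p * ln (1 + u / p) + q * ln (1 + v / q).
set Snew := (p + q) * ln (1 + (u + v) / (p + q)).
have Sold0 : 0 < Sold.
  apply: addr_gt0; apply: mulr_gt0 => //; apply: ln_gt0; rewrite ltrDl; exact: divr_gt0.
have Snew0 : 0 < Snew.
  move: Hls Sold0; rewrite -/Sold -/Snew. lra.
set lam := Sold / Snew.
have lam0 : 0 < lam by apply: divr_gt0.
have lam1 : lam < 1 by rewrite /lam ltr_pdivrMr // mul1r.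
have lamS : lam * Snew = Sold by rewrite /lam divfK // gt_eqF.
have ji : j != i by rewrite eq_sym.
pose E' := fun n : 'I_N => if n == i then lam * E i else if n == j then lam * E j else E n.
pose t' := fun n : 'I_N => if n == i then lam * u * (p + q) / (u + v)
   else if n == j then lam * v * (p + q) / (u + v) else t n.
have E'i : E' i = lam * E i by rewrite /E' eqxx.
have E'j : E' j = lam * E j by rewrite /E' (negbTE ji) eqxx.
have t'i : t' i = lam * u * (p + q) / (u + v) by rewrite /t' eqxx.
have t'j : t' j = lam * v * (p + q) / (u + v) by rewrite /t' (negbTE ji) eqxx.
have rateG : forall (Ex tx : R) n, 0 < tx ->
    rate_term W sigma2 (h n) Ex tx = W * (tx * ln (1 + Ex * a n / tx)).
  move=> Ex tx n tn; rewrite /rate_term gt_eqF //.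
  have -> : Ex * h n / (tx * sigma2 * W) = Ex * a n / tx.
    by rewrite /a; field; repeat (apply/andP; split); rewrite gt_eqF.
  by rewrite -mulrA mulrCA.
have uv0 : 0 < u + v by lra.
have pq0 : 0 < p + q by rewrite /p /q; lra.
have t'i0 : 0 < t' i by rewrite t'i; apply: divr_gt0 => //; apply: mulr_gt0 => //; apply: mulr_gt0.
have t'j0 : 0 < t' j by rewrite t'j; apply: divr_gt0 => //; apply: mulr_gt0 => //; apply: mulr_gt0.
have ri : E' i * a i / t' i = (u + v) / (p + q).
  rewrite E'i t'i (_ : lam * E i * a i = lam * u); last by rewrite /u mulrA.
  field; repeat (apply/andP; split); rewrite gt_eqF //.
have rj : E' j * a j / t' j = (u + v) / (p + q).
  rewrite E'j t'j (_ : lam * E j * a j = lam * v); last by rewrite /v mulrA.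
  field; repeat (apply/andP; split); rewrite gt_eqF //.
have tsum : t' i + t' j = lam * (p + q).
  rewrite t'i t'j; field; rewrite gt_eqF //.
have rsum : rate_term W sigma2 (h i) (E' i) (t' i) + rate_term W sigma2 (h j) (E' j) (t' j)
   = rate_term W sigma2 (h i) (E i) (t i) + rate_term W sigma2 (h j) (E j) (t j).
  rewrite !rateG // ri rj -mulrDr -mulrDl tsum -mulrA lamS.
  by rewrite /Sold mulrDr.
have Hfeas : feasible h W sigma2 L T fB d E' t'.
  split.
  - rewrite (sum2 _ ij) rsum.
    have -> : \sum_(n < N | (n != i) && (n != j)) rate_term W sigma2 (h n) (E' n) (t' n)
       = \sum_(n < N | (n != i) && (n != j)) rate_term W sigma2 (h n) (E n) (t n).
      by apply: eq_bigr => n /andP[ni nj]; rewrite /E' /t' (negbTE ni) (negbTE nj).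
    by rewrite -(sum2 _ ij).
  - rewrite (sum2 _ ij) tsum.
    have -> : \sum_(n < N | (n != i) && (n != j)) t' n
       = \sum_(n < N | (n != i) && (n != j)) t n.
      by apply: eq_bigr => n /andP[ni nj]; rewrite /t' (negbTE ni) (negbTE nj).
    move: Htime; rewrite (sum2 t ij) -/p -/q.
    have : lam * (p + q) <= p + q by nra.
    lra.
  - move=> n; have [->|ni] := eqVneq n i.
      by split; [rewrite E'i; apply: mulr_ge0; lra| exact: ltW].
    have [->|nj] := eqVneq n j.
      by split; [rewrite E'j; apply: mulr_ge0; lra| exact: ltW].
    by rewrite /E' /t' (negbTE ni) (negbTE nj); exact: Hnn.
have := Hmin E' t' Hfeas.
rewrite /objective (sum2 _ ij) [X in _ <= X](sum2 _ ij).
have -> : \sum_(n < N | (n != i) && (n != j)) E' n * (1 + h n / g n)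
   = \sum_(n < N | (n != i) && (n != j)) E n * (1 + h n / g n).
  by apply: eq_bigr => n /andP[ni nj]; rewrite /E' (negbTE ni) (negbTE nj).
rewrite E'i E'j.
have ci : 0 < E i * (1 + h i / g i) by apply: mulr_gt0 => //; apply: addr_gt0 => //; apply: divr_gt0.
have cj : 0 < E j * (1 + h j / g j) by apply: mulr_gt0 => //; apply: addr_gt0 => //; apply: divr_gt0.
have ei : forall c e, lam * e * c = lam * (e * c) by move=> c e; rewrite mulrA.
rewrite !ei.
move: lam0 lam1 ci cj.
set S := \sum_(n < N | _) _.
clearbody S.
generalize lam (E i * (1 + h i / g i)) (E j * (1 + h j / g j)).
move=> l X Y l0 l1 X0 Y0 H.
have hX : 0 < (1 - l) * X by apply: mulr_gt0 => //; lra.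
have hY : 0 < (1 - l) * Y by apply: mulr_gt0 => //; lra.
move: hX hY; rewrite !mulrBl !mul1r; lra.
Qed.
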